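(* Let $f$ be a nonzero real polynomial in $x_1,\ldots,x_n$ all of whose coefficients in the scaled monomial basis lie in $\{0,1\}$, and let $\mathcal{M}$ be the set of monomials occurring in $f$ (those with coefficient $1$). Then for every integer $k\ge 0$, $$\dim \partial^{=k} f \geq \frac{\sum_{P \in \mathcal{M}} \binom{\sup(P)}{k}}{|\mathcal{M}|^2},$$ where $\sup(P)$ denotes the number of distinct variables occurring in the monomial $P$.
   Context: For $\alpha\in\mathbb{N}^n$ the scaled monomial is $x^\alpha = x_1^{\alpha_1}\cdots x_n^{\alpha_n}/(\alpha_1!\cdots\alpha_n!)$; these form a basis of $\mathbb{R}[x_1,\ldots,x_n]$ (the scaled monomial basis), and coefficients of $f$ are taken with respect to this basis, i.e. $f=\sum_\alpha a_\alpha x^\alpha$. For $\beta\in\mathbb{N}^n$, $\partial_\beta f$ is the partial derivative differentiating $\beta_i$ times with respect to $x_i$; $\partial^{=k} f$ is the real linear span of all $\partial_\beta f$ with $\beta_1+\cdots+\beta_n=k$. *)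

(* Defs.v *)
From HB Require Import structures.
From mathcomp Require Import all_boot all_order all_algebra.
From mathcomp Require Import mpoly.
From mathcomp Require Import reals.
From Stdlib Require Import ClassicalDescription.

Set Implicit Arguments.
Unset Strict Implicit.
Unset Printing Implicit Defensive.

Import Order.TTheory GRing.Theory Num.Theory.
Local Open Scope ring_scope.

Definition pbool (P : Prop) : bool :=
  if excluded_middle_informative P then true else false.

Definition lin_indep (K : fieldType) (V : lmodType K) (s : seq V) : Prop :=
  forall c : 'I_(size s) -> K,
    \sum_(i < size s) c i *: s`_i = 0 -> forall i, c i = 0.

Definition dim_spanf (K : fieldType) (V : lmodType K) (s : seq V) : nat :=
  (\max_(b : (size s).-tuple bool | pbool (lin_indep (mask b s)))
      size (mask b s))%N.

Definition mfact (n : nat) (m : 'X_{1..n}) : nat := (\prod_(i < n) (m i)`!)%N.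

Definition smono (R : fieldType) (n : nat) (m : 'X_{1..n}) : {mpoly R[n]} :=
  ((mfact m)%:R)^-1 *: 'X_[m].

(* partial^{=k} f : the family of all partial_beta f with |beta| = k *)
Definition derivs_eq (R : fieldType) (n k : nat) (f : {mpoly R[n]})
  : seq {mpoly R[n]} :=
  map (fun b : 'X_{1..n < k.+1} => mderivm (val b) f)
      (filter (fun b : 'X_{1..n < k.+1} => mdeg (val b) == k)
              (enum (predT : pred (bmultinom n k.+1)))).

Definition msup (n : nat) (m : 'X_{1..n}) : nat := #|[set i : 'I_n | m i != 0%N]|.

(* Main.v *)
Require Import Defs.
From HB Require Import structures.
From mathcomp Require Import all_boot all_order all_algebra.
From mathcomp Require Import mpoly.
From mathcomp Require Import reals.
From mathcomp Require Import zify.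
From Stdlib Require Import Classical ClassicalDescription.
Set Implicit Arguments.
Unset Strict Implicit.
Import Order.TTheory GRing.Theory Num.Theory.
Local Open Scope ring_scope.

Definition in_span (K : fieldType) (V : lmodType K) (x : V) (t : seq V) : Prop :=
  exists c : nat -> K, x = \sum_(i < size t) c i *: t`_i.


Lemma basis_exists (K : fieldType) (V : lmodType K) (s : seq V) :
  exists b : seq bool, [/\ size b = size s, lin_indep (mask b s) &
     forall x, x \in s -> in_span x (mask b s)].
Proof.
elim: s => [|x s [b [Hsz Hind Hsp]]].
  exists [::]; split => //; first by move=> c _ [].
case: (classic (in_span x (mask b s))) => Hx.
  exists (false :: b); split => //=; first by rewrite Hsz.
  by move=> y; rewrite inE => /orP [/eqP -> //|]; apply: Hsp.
exists (true :: b); split => /=; first by rewrite Hsz.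
- set t := mask b s in Hind Hsp Hx *.
  move=> c; rewrite big_ord_recl /= => Hc.
  have c0 : c ord0 = 0.
    apply: contra_not_eq Hx => Hc0.
    exists (fun j => - (c (inord j.+1)) / c ord0).
    apply: (scalerI Hc0); rewrite scaler_sumr.
    apply: (addrI (\sum_(i < size t) c (lift ord0 i) *: t`_i)).
    rewrite addrC Hc -big_split /= big1 // => i _.
    rewrite scalerA mulrCA mulfV // mulr1 scaleNr.
    have -> : (inord i.+1 : 'I_(size t).+1) = lift ord0 i.
      by apply: val_inj; rewrite /= inordK // ltnS.
    by rewrite addrN.
  move: Hc; rewrite c0 scale0r add0r => /Hind Hi.
  move=> i; case: (unliftP ord0 i) => [j ->|->] //; exact: Hi.
- move=> y; rewrite inE => /orP [/eqP ->|/Hsp [c Hc]].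
    exists (fun j => (j == 0)%:R); rewrite big_ord_recl /= scale1r big1 ?addr0 //.
    by move=> i _; rewrite scale0r.
  exists (fun j => if j is j'.+1 then c j' else 0).
  by rewrite big_ord_recl /= scale0r add0r Hc; apply: eq_bigr => i _.
Qed.

Lemma dim_ge (K : fieldType) (V : lmodType K) (s : seq V) (b : seq bool) :
  size b = size s -> lin_indep (mask b s) -> (size (mask b s) <= dim_spanf s)%N.
Proof.
move=> Hsz Hind; rewrite /dim_spanf.
have Hb : size b == size s by apply/eqP.
pose bt := Tuple Hb.
have -> : mask b s = mask bt s by [].
apply: (@leq_bigmax_cond _ (fun b : (size s).-tuple bool => pbool (lin_indep (mask b s)))).
by rewrite /pbool; case: excluded_middle_informative.
Qed.
Lemma span_coeff (R : fieldType) n (x : {mpoly R[n]}) t m :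
  in_span x t -> x@_m != 0 -> exists2 i, (i < size t)%N & (t`_i)@_m != 0.
Proof.
move=> [c ->] H; case: (classic (exists2 i, (i < size t)%N & (t`_i)@_m != 0)) => // Hn.
exfalso; move/eqP: H; apply.
rewrite raddf_sum /= big1 // => i _.
rewrite mcoeffZ; case: (eqVneq (t`_i)@_m 0) => [->|Hi]; first by rewrite mulr0.
by exfalso; apply: Hn; exists i.
Qed.

Lemma coeff_f (R : realType) n (M : seq 'X_{1..n}) (f : {mpoly R[n]}) P :
  uniq M -> f = \sum_(m <- M) smono R m ->
  f@_P = if P \in M then ((mfact P)%:R)^-1 else 0.
Proof.
move=> HU ->; rewrite raddf_sum /=.
have E : forall m, (smono R m)@_P = if m == P then ((mfact P)%:R)^-1 else 0.
  by move=> m; rewrite /smono mcoeffZ mcoeffX; case: eqP => [->|_]; rewrite ?mulr1 ?mulr0.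
case: ifP => HP.
  rewrite (bigD1_seq P) //= E eqxx big1 ?addr0 // => m /negbTE Hm.
  by rewrite E Hm.
rewrite big1_seq // => m /andP [_ Hm]; rewrite E; case: eqP => // Em.
by rewrite -Em Hm in HP.
Qed.

Lemma mfact_neq0 (R : realType) n (P : 'X_{1..n}) : ((mfact P)%:R : R)^-1 != 0.
Proof.
rewrite invr_eq0 pnatr_eq0 -lt0n /mfact; apply: prodn_gt0 => i; exact: fact_gt0.
Qed.

Lemma coeff_deriv (R : realType) n (M : seq 'X_{1..n}) (f : {mpoly R[n]}) b Q :
  uniq M -> f = \sum_(m <- M) smono R m ->
  ((mderivm b f)@_Q != 0) = ((b + Q)%MM \in M).
Proof.
move=> HU Hf; rewrite mcoeff_mderivm mulrn_eq0 (coeff_f _ HU Hf).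
have -> : (\prod_(i < n) ((b + Q)%MM i) ^_ (b i) == 0)%N = false.
  apply/negbTE; rewrite -lt0n; apply: prodn_gt0 => i.
  by rewrite ffact_gt0 mnmDE leq_addr.
case: ifP => _ /=; first by rewrite (negbTE (mfact_neq0 _ _)).
by rewrite eqxx.
Qed.

Theorem theorem2 (R : realType) (n : nat) (M : seq 'X_{1..n}) (f : {mpoly R[n]})
  (k : nat) :
  uniq M -> M != [::] ->
  f = \sum_(m <- M) smono R m ->
  ((\sum_(m <- M) 'C(msup m, k))%:R / ((size M) ^ 2)%:R : R)
    <= (dim_spanf (derivs_eq k f))%:R.
Proof.
move=> HU HM Hf.
set D := derivs_eq k f.
have [b [Hsz Hind Hsp]] := basis_exists D.
pose L := filter (fun bt : 'X_{1..n < k.+1} => mdeg (val bt) == k)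
              (enum (predT : pred (bmultinom n k.+1))).
pose Lv := map val (mask b L).
have HB : mask b D = map (fun bt => mderivm bt f) Lv.
  by rewrite /Lv -map_comp /D /derivs_eq map_mask.
have Hd : (size Lv <= dim_spanf D)%N.
  by have := dim_ge Hsz Hind; rewrite HB size_map.
have Hcard : forall m, m \in M ->
    ('C(msup m, k) <= size Lv * size M)%N.
  move=> m Hm; rewrite /msup -cards_draws.
  set T := [set S : {set 'I_n} | _ & _].
  pose mS (S : {set 'I_n}) : 'X_{1..n} := [multinom ((i \in S) : nat) | i < n].
  pose Q S := (m - mS S)%MM.
  pose Pr S (p : 'I_(size Lv) * 'I_(size M)) :=
    ((nth 0%MM Lv p.1 + Q S)%MM == nth 0%MM M p.2).
  pose F S := [pick p | Pr S p].
  have hle : forall S, S \in T -> forall i, (mS S i <= m i)%N.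
    move=> S; rewrite inE => /andP [/subsetP HS _] i; rewrite mnmE.
    case: (boolP (i \in S)) => //= /HS; rewrite inE lt0n //.
  have hadd : forall S, S \in T -> (mS S + Q S = m)%MM.
    move=> S HS; apply/mnmP => i; rewrite mnmDE mnmBE; exact: subnKC (hle S HS i).
  have hex : forall S, S \in T -> exists p, Pr S p.
    move=> S HS.
    have hdeg : mdeg (mS S) = k.
      rewrite mdegE (eq_bigr (fun i => ((i \in S) : nat))); last by move=> i _; rewrite mnmE.
      move: HS; rewrite inE => /andP [_ /eqP <-].
      rewrite -sum1_card [RHS]big_mkcond /=; apply: eq_bigr => i _; by case: (i \in S).
    have hbnd : (mdeg (mS S) < k.+1)%N by rewrite hdeg.
    pose bb : 'X_{1..n < k.+1} := BMultinom hbnd.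
    have hin : mderivm (mS S) f \in D.
      rewrite /D /derivs_eq; apply/mapP; exists bb => //.
      by rewrite mem_filter /= hdeg eqxx mem_enum.
    have hnz : (mderivm (mS S) f)@_(Q S) != 0.
      by rewrite (coeff_deriv _ _ HU Hf) hadd.
    have [j hj hBj] := span_coeff (Hsp _ hin) hnz.
    rewrite HB size_map in hj; rewrite HB (nth_map 0%MM) // in hBj.
    rewrite (coeff_deriv _ _ HU Hf) in hBj.
    have hi : (index (nth 0%MM Lv j + Q S)%MM M < size M)%N by rewrite index_mem.
    exists (Ordinal hj, Ordinal hi); rewrite /Pr /= nth_index //.
  have HF : forall S, S \in T -> exists2 p, F S = Some p & Pr S p.
    move=> S HS; rewrite /F; case: pickP => [p Hp|Hn]; first by exists p.
    by have [p Hp] := hex S HS; rewrite Hn in Hp.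
  have Finj : {in T &, injective F}.
    move=> S S' HS HS' E.
    have [p Hp Pp] := HF S HS; have [p' Hp' Pp'] := HF S' HS'.
    move: E; rewrite Hp Hp' => -[Ep]; subst p'.
    move: Pp Pp'; rewrite /Pr => /eqP E1 /eqP E2.
    have EQ : Q S = Q S' by apply/eqP; rewrite -(eqm_add2l (nth 0%MM Lv p.1)) E1 E2.
    have EM : mS S = mS S'.
      by apply/eqP; rewrite -(eqm_add2l (Q S)) !(addmC (Q S)) hadd // EQ hadd.
    apply/setP => i; have := congr1 (fun x : 'X_{1..n} => x i) EM.
    rewrite /= !mnmE; by case: (i \in S); case: (i \in S').
  rewrite -(card_in_imset Finj).
  apply: (leq_trans (subset_leq_card (_ : F @: T \subset [set Some p | p in setT]))).
    apply/subsetP => _ /imsetP [S HS ->]; have [p -> _] := HF S HS.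
    by apply: imset_f; rewrite inE.
  by rewrite card_imset; last exact: Some_inj; rewrite cardsT card_prod !card_ord.
have Hsum : (\sum_(m <- M) 'C(msup m, k) <= size M * (size Lv * size M))%N.
  rewrite big_seq; apply: (@leq_trans (\sum_(m <- M | m \in M) (size Lv * size M))%N); first by apply: leq_sum.
  rewrite -big_seq big_const_seq count_predT iter_addn_0 mulnC //.
have Hpos : (0 < size M ^ 2)%N by rewrite expn_gt0 lt0n size_eq0 HM.
rewrite ler_pdivrMr ?ltr0n // -natrM ler_nat.
nia.
Qed.
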